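(* For $0\le v\le 1$ and $a,b>0$, $$H(a,b)\le G\left(H_v(a,b),H_{1-v}(a,b)\right)\le G(a,b)$$ and $$H(a,b)\le H\left(G_v(a,b),G_{1-v}(a,b)\right)\le G(a,b).$$
   Context: For $x,y>0$ and $0\le v\le 1$: $G(x,y):=\sqrt{xy}$, $G_v(x,y):=x^{1-v}y^v$, the weighted harmonic mean $H_v(x,y):=\left\{(1-v)x^{-1}+vy^{-1}\right\}^{-1}$, and $H(x,y):=H_{1/2}(x,y)=\frac{2xy}{x+y}$. *)

(* Defs.v *)
From Stdlib Require Import Reals.
Open Scope R_scope.

Definition Gm (x y : R) : R := sqrt (x * y).
Definition Gw (v x y : R) : R := Rpower x (1 - v) * Rpower y v.
Definition Hw (v x y : R) : R := / ((1 - v) * / x + v * / y).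
Definition Hm (x y : R) : R := 2 * x * y / (x + y).

(* Main.v *)
Require Import Defs.
From Stdlib Require Import Reals Lra Psatz.
Open Scope R_scope.

Lemma exp_ge (x : R) : 1 + x <= exp x.
Proof.
  destruct (Req_dec x 0) as [->|H].
  - rewrite exp_0; lra.
  - left; apply exp_ineq1; exact H.
Qed.

Lemma div_nonneg (n d : R) : 0 <= n -> 0 < d -> 0 <= n / d.
Proof. intros; unfold Rdiv; apply Rmult_le_pos; [lra| left; apply Rinv_0_lt_compat; lra]. Qed.

Lemma young (v a b : R) : 0 <= v <= 1 -> 0 < a -> 0 < b ->
  Gw v a b <= (1 - v) * a + v * b.
Proof.
  intros Hv Ha Hb. unfold Gw, Rpower.
  rewrite <- exp_plus.
  set (m := (1 - v) * ln a + v * ln b).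
  assert (Ea : a = exp m * exp (ln a - m)) by (rewrite <- exp_plus, <- (exp_ln a) at 1 by lra; f_equal; ring).
  assert (Eb : b = exp m * exp (ln b - m)) by (rewrite <- exp_plus, <- (exp_ln b) at 1 by lra; f_equal; ring).
  pose proof (exp_ge (ln a - m)). pose proof (exp_ge (ln b - m)).
  pose proof (exp_pos m).
  assert (E : (1 - v) * (ln a - m) + v * (ln b - m) = 0) by (unfold m; ring).
  rewrite Ea at 1. rewrite Eb at 1.
  assert (K : 1 <= (1 - v) * exp (ln a - m) + v * exp (ln b - m)) by nra.
  nra.
Qed.

Lemma sqrt_ge (h q : R) : 0 <= h -> h * h <= q -> h <= sqrt q.
Proof.
  intros H1 H2. rewrite <- (sqrt_Rsqr h) by lra. apply sqrt_le_1_alt. unfold Rsqr; lra.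
Qed.

Theorem proposition2p9 (v a b : R) :
  0 <= v <= 1 -> 0 < a -> 0 < b ->
  (Hm a b <= Gm (Hw v a b) (Hw (1 - v) a b) /\
   Gm (Hw v a b) (Hw (1 - v) a b) <= Gm a b) /\
  (Hm a b <= Hm (Gw v a b) (Gw (1 - v) a b) /\
   Hm (Gw v a b) (Gw (1 - v) a b) <= Gm a b).
Proof.
  intros Hv Ha Hb.
  assert (D1 : 0 < (1 - v) * b + v * a) by nra.
  assert (D2 : 0 < v * b + (1 - v) * a) by nra.
  assert (Hab : 0 < a * b) by nra.
  assert (E1 : Hw v a b = a * b / ((1 - v) * b + v * a)).
  { unfold Hw. field. repeat split; lra. }
  assert (E2 : Hw (1 - v) a b = a * b / (v * b + (1 - v) * a)).
  { unfold Hw. field. repeat split; lra. }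
  assert (P1 : (a + b) * (a + b) - 4 * (((1 - v) * b + v * a) * (v * b + (1 - v) * a)) >= 0)
    by (pose proof (Rle_0_sqr (((1 - v) * b + v * a) - (v * b + (1 - v) * a))); unfold Rsqr in *; nra).
  assert (P2 : ((1 - v) * b + v * a) * (v * b + (1 - v) * a) - a * b >= 0)
    by (pose proof (Rle_0_sqr (a - b)); unfold Rsqr in *; assert (0 <= v * (1 - v)) by nra; nra).
  split; [split|split].
  - unfold Gm, Hm. rewrite E1, E2. apply sqrt_ge.
    + apply div_nonneg; lra.
    + apply Rminus_le.
      replace (2 * a * b / (a + b) * (2 * a * b / (a + b)) -
               a * b / ((1 - v) * b + v * a) * (a * b / (v * b + (1 - v) * a)))
        with (- ((a*b)*(a*b) * ((a + b) * (a + b) - 4 * (((1 - v) * b + v * a) * (v * b + (1 - v) * a))))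
              / (((1 - v) * b + v * a) * (v * b + (1 - v) * a) * ((a+b)*(a+b)))).
      * assert (0 <= ((a*b)*(a*b) * ((a + b) * (a + b) - 4 * (((1 - v) * b + v * a) * (v * b + (1 - v) * a))))
              / (((1 - v) * b + v * a) * (v * b + (1 - v) * a) * ((a+b)*(a+b)))).
        { apply div_nonneg; [nra|]. apply Rmult_lt_0_compat; nra. }
        unfold Rdiv in *. lra.
      * field. repeat split; lra.
  - unfold Gm. rewrite E1, E2. apply sqrt_le_1_alt.
    apply Rminus_le.
    replace (a * b / ((1 - v) * b + v * a) * (a * b / (v * b + (1 - v) * a)) - a * b)
      with (- ((a*b) * (((1 - v) * b + v * a) * (v * b + (1 - v) * a) - a * b))
             / (((1 - v) * b + v * a) * (v * b + (1 - v) * a))).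
    + assert (0 <= ((a*b) * (((1 - v) * b + v * a) * (v * b + (1 - v) * a) - a * b))
             / (((1 - v) * b + v * a) * (v * b + (1 - v) * a))).
      { apply div_nonneg; [nra|]. apply Rmult_lt_0_compat; nra. }
      unfold Rdiv in *. lra.
    + field. repeat split; lra.
  - pose proof (young v a b Hv Ha Hb).
    assert (Hv' : 0 <= 1 - v <= 1) by lra.
    pose proof (young (1 - v) a b Hv' Ha Hb).
    assert (Gx : 0 < Gw v a b) by (unfold Gw, Rpower; apply Rmult_lt_0_compat; apply exp_pos).
    assert (Gy : 0 < Gw (1 - v) a b) by (unfold Gw, Rpower; apply Rmult_lt_0_compat; apply exp_pos).
    assert (XY : Gw v a b * Gw (1 - v) a b = a * b).
    { unfold Gw, Rpower. rewrite <- !exp_plus.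
      rewrite <- (exp_ln a) at 3 by lra. rewrite <- (exp_ln b) at 3 by lra.
      rewrite <- exp_plus. f_equal. ring. }
    unfold Hm. replace (2 * Gw v a b * Gw (1 - v) a b) with (2 * a * b) by (rewrite (Rmult_assoc 2 (Gw v a b)), XY; ring).
    set (x := Gw v a b) in *. set (y := Gw (1 - v) a b) in *.
    apply Rminus_le.
    replace (2 * a * b / (a + b) - 2 * a * b / (x + y))
      with (- (2 * a * b * ((a + b) - (x + y))) / ((a + b) * (x + y))).
    + assert (0 <= (2 * a * b * ((a + b) - (x + y))) / ((a + b) * (x + y))).
      { apply div_nonneg; [nra|]. apply Rmult_lt_0_compat; nra. }
      unfold Rdiv in *. lra.
    + field. split; lra.
  - assert (Gx : 0 < Gw v a b) by (unfold Gw, Rpower; apply Rmult_lt_0_compat; apply exp_pos).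
    assert (Gy : 0 < Gw (1 - v) a b) by (unfold Gw, Rpower; apply Rmult_lt_0_compat; apply exp_pos).
    assert (XY : Gw v a b * Gw (1 - v) a b = a * b).
    { unfold Gw, Rpower. rewrite <- !exp_plus.
      rewrite <- (exp_ln a) at 3 by lra. rewrite <- (exp_ln b) at 3 by lra.
      rewrite <- exp_plus. f_equal. ring. }
    unfold Hm, Gm. replace (2 * Gw v a b * Gw (1 - v) a b) with (2 * a * b) by (rewrite (Rmult_assoc 2 (Gw v a b)), XY; ring).
    set (x := Gw v a b) in *. set (y := Gw (1 - v) a b) in *.
    set (s := sqrt (a * b)).
    assert (Hs : s * s = a * b) by (apply sqrt_sqrt; lra).
    assert (Hs0 : 0 < s) by (apply sqrt_lt_R0; lra).
    assert (S2 : 2 * s <= x + y).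
    { assert (Q : (2 * s) * (2 * s) <= (x + y) * (x + y)) by (pose proof (Rle_0_sqr (x - y)); unfold Rsqr in *; nra).
      destruct (Rle_or_lt (2 * s) (x + y)) as [h|h]; [exact h|].
      assert ((x + y) * (x + y) < (2 * s) * (2 * s)) by (apply Rmult_le_0_lt_compat; lra). lra. }
    apply Rminus_le.
    replace (2 * a * b / (x + y) - s) with (- (s * ((x + y) - 2 * s)) / (x + y)).
    + assert (0 <= (s * ((x + y) - 2 * s)) / (x + y)) by (apply div_nonneg; nra).
      unfold Rdiv in *. lra.
    + replace (2 * a * b) with (2 * (s * s)) by (rewrite Hs; ring). field. lra.
Qed.
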